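(* If $G$ is a non-abelian finite group, then $\mathrm{am}(\mathrm{ZL}^1(G))>1$.
   Context: $\mathrm{L}^1(G)$ is the convolution algebra of $G$ with normalised Haar measure $\int_G f=\frac1{|G|}\sum_{s\in G}f(s)$, and $\mathrm{ZL}^1(G)$ its centre. For a Banach algebra $\mathfrak{A}$, $\mathrm{am}(\mathfrak{A})$ is the infimum of $\sup_\alpha\|\mu_\alpha\|$ over bounded approximate diagonals, i.e. bounded nets $(\mu_\alpha)$ in $\mathfrak{A}\hat\otimes\mathfrak{A}$ with $m(\mu_\alpha)a\to a$, $a\,m(\mu_\alpha)\to a$, $a\cdot\mu_\alpha-\mu_\alpha\cdot a\to0$ for all $a$ ($m$ multiplication, $a\cdot(b\otimes c)=ab\otimes c$, $(b\otimes c)\cdot a=b\otimes ca$). *)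

(* Defs.v *)
From HB Require Import structures.
From mathcomp Require Import all_boot all_order all_algebra all_fingroup.
From mathcomp Require Import complex.
From mathcomp Require Import boolp classical_sets reals constructive_ereal ereal.
Set Implicit Arguments. Unset Strict Implicit. Unset Printing Implicit Defensive.
Import Order.TTheory GRing.Theory Num.Theory.
Local Open Scope ring_scope.
Local Open Scope classical_set_scope.

Section ZL1.
Variables (R : realType) (gT : finGroupType).
Local Notation C := R[i].

Definition cmod (z : C) : R := Num.sqrt (complex.Re z ^+ 2 + complex.Im z ^+ 2).

(* L^1(G): functions G -> C; normalised Haar measure int f = |G|^-1 sum_s f s *)
Definition l1norm (f : gT -> C) : R :=
  (#|gT|%:R)^-1 * \sum_(s : gT) cmod (f s).

Definition conv (f g : gT -> C) : gT -> C :=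
  fun t => ((#|gT|%:R)^-1)%:C%C * \sum_(s : gT) f s * g (s^-1 * t)%g.

Definition inZL1 (f : gT -> C) : Prop := forall g : gT -> C, conv f g = conv g f.

(* Elementary tensors and finite sums of them; ZL^1(G) (x) ZL^1(G) is realised
   (G finite, so everything is finite-dimensional and the projective tensor
   product is algebraic) inside the functions G x G -> C. *)
Definition tens (s : seq ((gT -> C) * (gT -> C))) : gT -> gT -> C :=
  fun x y => \sum_(p <- s) p.1 x * p.2 y.

Definition ZL1_rep (mu : gT -> gT -> C) (s : seq ((gT -> C) * (gT -> C))) : Prop :=
  (forall p, p \in s -> inZL1 p.1 /\ inZL1 p.2) /\ mu = tens s.

Definition inZL1tens (mu : gT -> gT -> C) : Prop := exists s, ZL1_rep mu s.

Definition projnorm (mu : gT -> gT -> C) : R :=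
  inf [set x : R | exists s, ZL1_rep mu s /\
                   x = \sum_(p <- s) l1norm p.1 * l1norm p.2].

(* multiplication map m(a (x) b) = a * b *)
Definition tmul (mu : gT -> gT -> C) : gT -> C :=
  fun u => ((#|gT|%:R)^-1)%:C%C * \sum_(s : gT) mu s (s^-1 * u)%g.

(* module actions a.(b (x) c) = ab (x) c,  (b (x) c).a = b (x) ca *)
Definition lact (a : gT -> C) (mu : gT -> gT -> C) : gT -> gT -> C :=
  fun x y => conv a (fun z => mu z y) x.
Definition ract (mu : gT -> gT -> C) (a : gT -> C) : gT -> gT -> C :=
  fun x y => conv (mu x) a y.

Definition tsub (mu nu : gT -> gT -> C) : gT -> gT -> C := fun x y => mu x y - nu x y.

Definition directed_set (I : Type) (le : I -> I -> Prop) : Prop :=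
  [/\ inhabited I, (forall i, le i i), (forall i j k, le i j -> le j k -> le i k)
    & (forall i j, exists k, le i k /\ le j k)].

Definition net_to0 (I : Type) (le : I -> I -> Prop) (r : I -> R) : Prop :=
  forall eps : R, 0 < eps -> exists i0, forall i, le i0 i -> r i < eps.

Definition bdd_approx_diag (I : Type) (le : I -> I -> Prop)
  (mu : I -> gT -> gT -> C) : Prop :=
  [/\ directed_set le,
      (forall i, inZL1tens (mu i)),
      (exists M : R, forall i, projnorm (mu i) <= M) &
   [/\
      (forall a, inZL1 a ->
         net_to0 le (fun i => l1norm (fun t => conv (tmul (mu i)) a t - a t))),
      (forall a, inZL1 a ->
         net_to0 le (fun i => l1norm (fun t => conv a (tmul (mu i)) t - a t)))
    & (forall a, inZL1 a ->
         net_to0 le (fun i => projnorm (tsub (lact a (mu i)) (ract (mu i) a))))]].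

(* amenability constant am(ZL^1(G)) in the extended reals (+oo if no b.a.d.) *)
Definition amZL1 : \bar R :=
  ereal_inf [set c : \bar R | exists (I : Type) (le : I -> I -> Prop)
                                  (mu : I -> gT -> gT -> C),
               bdd_approx_diag le mu /\
               c = ereal_sup [set (projnorm (mu i))%:E | i in [set: I]]].

End ZL1.

(* Main.v *)
Require Import Defs.
From HB Require Import structures.
From mathcomp Require Import all_boot all_order all_algebra all_fingroup.
From mathcomp Require Import complex.
From mathcomp Require Import boolp classical_sets reals constructive_ereal ereal.
From mathcomp Require Import ring lra.
Set Implicit Arguments. Unset Strict Implicit. Unset Printing Implicit Defensive.
Import Order.TTheory GRing.Theory Num.Theory.
Local Open Scope ring_scope.

Section S.
Variables (R : realType) (gT : finGroupType).
Local Notation C := R[i].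
Implicit Types (f a : gT -> C) (sq : seq ((gT -> C) * (gT -> C))) (mu : gT -> gT -> C).
Local Open Scope complex_scope.
Local Open Scope ring_scope.

Lemma cmodE (z : C) : (cmod z)%:C = `|z|.
Proof. by case: z. Qed.

Lemma cmod_ge0 (z : C) : 0 <= cmod z.
Proof. by rewrite /cmod sqrtr_ge0. Qed.

Lemma cmodD (x y : C) : cmod (x + y) <= cmod x + cmod y.
Proof. by rewrite -lecR rmorphD /= !cmodE ler_normD. Qed.

Lemma cmodM (x y : C) : cmod (x * y) = cmod x * cmod y.
Proof. by apply: complexI; rewrite rmorphM /= !cmodE normrM. Qed.

Lemma cmodN (x : C) : cmod (- x) = cmod x.
Proof. by apply: complexI; rewrite !cmodE normrN. Qed.

Lemma cmodR (r : R) : cmod r%:C = `|r|.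
Proof. by rewrite /cmod /= expr0n /= addr0 sqrtr_sqr. Qed.

Lemma cmod_sum (I : Type) (r : seq I) (P : pred I) (F : I -> C) :
  cmod (\sum_(i <- r | P i) F i) <= \sum_(i <- r | P i) cmod (F i).
Proof.
rewrite -lecR cmodE rmorph_sum /=.
by apply: le_trans (ler_norm_sum _ _ _) _; rewrite le_eqVlt; apply/orP; left;
  apply/eqP; apply: eq_bigr => i _; rewrite cmodE.
Qed.

Lemma cmod_sum1 (I : Type) (r : seq I) (P : pred I) (F : I -> C) :
  cmod (\sum_(i <- r | P i) F i) <= \sum_(i <- r | P i) cmod (F i).
Proof. exact: cmod_sum. Qed.

Definition classf (f : gT -> C) := forall x h, f (x ^ h)%g = f x.

Lemma nG_neq0 : (#|gT|%:R : R) != 0.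
Proof. by rewrite pnatr_eq0 -lt0n; apply/card_gt0P; exists 1%g. Qed.

Lemma sum_ind (F : gT -> C) (a : gT) :
  \sum_s F s * (if s == a then 1 else 0) = F a.
Proof.
rewrite (bigD1 a) //= eqxx mulr1 big1 ?addr0 // => s /negPf ->; by rewrite mulr0.
Qed.

Lemma sum_indl (F : gT -> C) (a : gT) :
  \sum_s (if s == a then 1 else 0) * F s = F a.
Proof. by rewrite -[RHS](sum_ind F a); apply: eq_bigr => s _; rewrite mulrC. Qed.

Lemma inZL1_class f : inZL1 f -> classf f.
Proof.
move=> Hf x h.
pose w : gT := h^-1%g.
pose g := fun u : gT => if u == w then 1 else 0 : C.
have := congr1 (fun F => F (h^-1 * x)%g) (Hf g); rewrite /conv /=.
have E1 : forall s, g (s^-1 * (h^-1 * x))%g = if s == (h^-1 * x * w^-1)%g then 1 else 0.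
  move=> s; rewrite /g; congr (if _ then _ else _).
  apply/eqP/eqP => e; first by rewrite -e invMg invgK mulgA mulgV mul1g.
  by rewrite e invMg invgK -mulgA mulVg mulg1.
under eq_bigr do rewrite E1.
rewrite sum_ind sum_indl => /mulfI H.
rewrite conjgE mulgA; have -> : (h^-1 * x * h = h^-1 * x * w^-1)%g by rewrite /w invgK.
rewrite H /w ?invgK ?mulKVg //.
by apply/eqP => /complexI /eqP; rewrite invr_eq0 (negPf nG_neq0).
Qed.

Lemma class_inZL1 f : classf f -> inZL1 f.
Proof.
move=> Hf g; apply: funext => t; rewrite /conv; congr (_ * _).
have inj : injective (fun r : gT => t * r^-1)%g by move=> a b /mulgI /invg_inj.
rewrite (reindex_inj inj) /=; apply: eq_bigr => r _.
rewrite mulrC invMg invgK -mulgA mulVg mulg1; congr (_ * _).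
by rewrite -(Hf (t * r^-1)%g r) conjgE mulgA mulgA mulgKV.
Qed.

Lemma classf_conv a (p : gT -> C) : classf a -> classf p -> classf (conv a p).
Proof.
move=> Ha Hp x h; rewrite /conv; congr (_ * _).
rewrite (reindex_inj (@conjg_inj _ h)) /=; apply: eq_bigr => r _.
by rewrite Ha -conjVg -conjMg Hp.
Qed.

Lemma inZL1_conv a (p : gT -> C) : inZL1 a -> inZL1 p -> inZL1 (conv a p).
Proof.
by move=> /inZL1_class Ha /inZL1_class Hp; apply/class_inZL1/classf_conv.
Qed.

Lemma inZL1_opp (p : gT -> C) : inZL1 p -> inZL1 (fun x => - p x).
Proof. by move=> /inZL1_class Hp; apply/class_inZL1 => x h; rewrite Hp. Qed.

Lemma lact_tens a (s : seq ((gT -> C) * (gT -> C))) :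
  lact a (tens s) = tens [seq (conv a p.1, p.2) | p <- s].
Proof.
apply: funext => x; apply: funext => y.
rewrite /lact /tens /conv big_map big_distrr /=.
under eq_bigr do rewrite !big_distrr /=.
rewrite exchange_big /=; apply: eq_bigr => p _.
rewrite -mulrA big_distrl big_distrr /=; apply: eq_bigr => t _.
by rewrite !mulrA.
Qed.

Lemma ract_tens a (s : seq ((gT -> C) * (gT -> C))) :
  Defs.ract (tens s) a = tens [seq (p.1, conv p.2 a) | p <- s].
Proof.
apply: funext => x; apply: funext => y.
rewrite /Defs.ract /tens /conv big_map big_distrr /=.
under eq_bigr do rewrite big_distrl big_distrr /=.
rewrite exchange_big /=; apply: eq_bigr => p _.
rewrite mulrCA !big_distrr /=; apply: eq_bigr => t _.
by rewrite !mulrA.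
Qed.

Lemma tsub_tens (s1 s2 : seq ((gT -> C) * (gT -> C))) :
  tsub (tens s1) (tens s2) = tens (s1 ++ [seq ((fun x => - p.1 x) : gT -> C, p.2) | p <- s2]).
Proof.
apply: funext => x; apply: funext => y.
by rewrite /tsub /tens big_cat big_map /= -sumrN; congr (_ + _);
  apply: eq_bigr => p _; rewrite mulNr.
Qed.

Lemma all_map (P : (gT -> C) * (gT -> C) -> Prop)
  (F : (gT -> C) * (gT -> C) -> (gT -> C) * (gT -> C)) sq :
  (forall q, q \in sq -> P (F q)) -> forall p, p \in map F sq -> P p.
Proof.
elim: sq => [|q s IH] //= H p; rewrite in_cons => /orP [/eqP -> | ps].
  by apply: H; rewrite mem_head.
by apply: IH ps => r rs; apply: H; rewrite in_cons rs orbT.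
Qed.

Lemma comm_rep a mu : inZL1 a -> inZL1tens mu ->
  inZL1tens (tsub (lact a mu) (Defs.ract mu a)).
Proof.
move=> Ha [s [Hs ->]]; rewrite lact_tens ract_tens tsub_tens.
eexists; split; last by reflexivity.
move=> p; rewrite mem_cat => /orP [] Hp.
  apply: (all_map (P := fun p => inZL1 p.1 /\ inZL1 p.2) _ Hp) => q qs.
  by have [H1 H2] := Hs q qs; split => //; apply: inZL1_conv.
apply: (all_map (P := fun p => inZL1 p.1 /\ inZL1 p.2) _ Hp) => q qs.
apply: (all_map (P := fun q => inZL1 (fun x => - q.1 x) /\ inZL1 q.2) _ qs) => r rs.
by have [H1 H2] := Hs r rs; split; [apply: inZL1_opp | apply: inZL1_conv].
Qed.

Definition ninv : C := ((#|gT|%:R)^-1)%:C.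

Definition phiK (K : gT -> gT -> C) mu : C :=
  ninv * ninv * \sum_x \sum_y mu x y * K x y.

Lemma phiK_tens K (s : seq ((gT -> C) * (gT -> C))) :
  phiK K (tens s) = \sum_(p <- s) phiK K (fun x y => p.1 x * p.2 y).
Proof.
rewrite /phiK /tens -big_distrr /=; congr (_ * _).
under eq_bigr do under eq_bigr do rewrite big_distrl /=.
under eq_bigr do rewrite exchange_big /=.
by rewrite exchange_big.
Qed.

Lemma sum_bound (F : (gT -> C) * (gT -> C) -> C) (B : (gT -> C) * (gT -> C) -> R)
  (s : seq ((gT -> C) * (gT -> C))) :
  (forall p, inZL1 p.1 -> inZL1 p.2 -> cmod (F p) <= B p) ->
  (forall p, p \in s -> inZL1 p.1 /\ inZL1 p.2) ->
  cmod (\sum_(p <- s) F p) <= \sum_(p <- s) B p.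
Proof.
move=> HB; elim: s => [|p s IH] Hs; first by rewrite !big_nil /cmod /= expr0n /= addr0 sqrtr0.
rewrite !big_cons; apply: le_trans (cmodD _ _) _; apply: lerD.
  by have [H1 H2] := Hs p (mem_head _ _); apply: HB.
by apply: IH => q qs; apply: Hs; rewrite in_cons qs orbT.
Qed.

Lemma projnorm_bound K mu :
  (forall p q : gT -> C, inZL1 p -> inZL1 q ->
     cmod (phiK K (fun x y => p x * q y)) <= l1norm p * l1norm q) ->
  inZL1tens mu -> cmod (phiK K mu) <= projnorm mu.
Proof.
move=> HK [s0 Hs0]; rewrite /projnorm; apply: lb_le_inf.
  by exists (\sum_(p <- s0) l1norm p.1 * l1norm p.2), s0.
move=> r [s [[Hs ->] ->]]; rewrite phiK_tens.
apply: sum_bound => // p H1 H2; exact: HK.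
Qed.

Lemma phi_lact a L mu :
  phiK L (lact a mu) = phiK (fun x y => ninv * \sum_s a s * L (s * x)%g y) mu.
Proof.
rewrite /phiK /lact /conv; congr (_ * _).
transitivity (\sum_s \sum_x \sum_y ninv * a s * mu x y * L (s * x)%g y); last first.
  rewrite exchange_big /=; apply: eq_bigr => x _.
  rewrite exchange_big /=; apply: eq_bigr => y _.
  rewrite !big_distrr /=; apply: eq_bigr => t _; ring.
transitivity (\sum_x \sum_y \sum_s ninv * a s * mu (s^-1 * x)%g y * L x y).
  apply: eq_bigr => x _; apply: eq_bigr => y _.
  rewrite big_distrr big_distrl /=; apply: eq_bigr => t _; ring.
under eq_bigr do rewrite exchange_big /=.
rewrite exchange_big /=.
apply: eq_bigr => t _.
rewrite (reindex_inj (mulgI t)) /=; apply: eq_bigr => x _.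
by apply: eq_bigr => y _; rewrite mulKg.
Qed.

Lemma phi_ract a L mu :
  phiK L (Defs.ract mu a) = phiK (fun x y => ninv * \sum_w a (y^-1 * w)%g * L x w) mu.
Proof.
rewrite /phiK /Defs.ract /conv; congr (_ * _); apply: eq_bigr => x _.
transitivity (\sum_y \sum_t ninv * mu x t * a (t^-1 * y)%g * L x y).
  apply: eq_bigr => y _; rewrite big_distrr big_distrl /=; apply: eq_bigr => t _; ring.
rewrite exchange_big /=; apply: eq_bigr => t _.
rewrite !big_distrr /=; apply: eq_bigr => y _; ring.
Qed.

Lemma phi_tsub L m1 m2 : phiK L (tsub m1 m2) = phiK L m1 - phiK L m2.
Proof.
rewrite /phiK /tsub -mulrBr; congr (_ * _); rewrite -sumrB; apply: eq_bigr => x _.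
rewrite -sumrB; apply: eq_bigr => y _; ring.
Qed.

Lemma phi_lin (c1 c2 : C) K1 K2 mu :
  phiK (fun x y => c1 * K1 x y + c2 * K2 x y) mu = c1 * phiK K1 mu + c2 * phiK K2 mu.
Proof.
rewrite /phiK !mulr_sumr -big_split /=; apply: eq_bigr => x _.
rewrite !mulr_sumr -big_split /=; apply: eq_bigr => y _; ring.
Qed.

Lemma phi_delta mu :
  phiK (fun x y => if (x * y == 1)%g then 1 else 0) mu = ninv * tmul mu 1%g.
Proof.
rewrite /phiK /tmul -mulrA; congr (_ * _); congr (_ * _); apply: eq_bigr => x _.
have E : forall y, (x * y == 1)%g = (y == x^-1)%g.
  by move=> y; apply/eqP/eqP => [e|->]; [rewrite -(mulKg x y) e mulg1 | rewrite mulgV].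
under eq_bigr do rewrite E.
by rewrite sum_ind mulg1.
Qed.

Local Notation ZG := ('C([set: gT]))%g.
Variable g : gT.
Definition Cg : {set gT} := (g ^: [set: gT])%g.

Lemma Cg_class x h : ((x ^ h)%g \in Cg) = (x \in Cg).
Proof. by rewrite /Cg (class_transl _ (memJ_class x _)) ?inE. Qed.

Lemma Cg_nc s : g \notin ZG -> s \in Cg -> s \notin ZG.
Proof.
move=> gnc sC; apply/negP => /cent_classP sZ.
by move: sC; rewrite /Cg class_sym sZ inE => /eqP gs; move: gnc; rewrite gs; apply/negP/negPn/cent_classP.
Qed.

Lemma Cg_nc2 s x : g \notin ZG -> s \in Cg -> x \in ZG -> (s * x)%g \notin ZG.
Proof.
move=> gnc sC xZ; apply/negP => sxZ; move: (Cg_nc gnc sC) => /negP; apply.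
by rewrite -(mulgK x s) groupM ?groupV.
Qed.

Lemma nc_witness x : x \notin ZG -> exists h, (x * h != h * x)%g.
Proof.
move=> xnc; case: (boolP [exists h, (x * h != h * x)%g]) => [/existsP//|/existsPn H].
by case/negP: xnc; apply/centP => h _; apply/eqP; move: (H h); rewrite negbK.
Qed.

Lemma nc_conj_ne (x h : gT) : (x * h != h * x)%g -> ((x^-1) ^ h)%g != x^-1%g.
Proof.
move=> ne; apply/negP => /eqP H; case/negP: ne; apply/eqP.
have e1 : (x^-1 * h = h * x^-1)%g by rewrite -[in RHS]H conjgE !mulgA mulgV mul1g.
move/(congr1 (fun z => x * z * x)%g): e1.
by rewrite mulKVg mulgA mulgKV => ->.
Qed.

Lemma cmod1 : cmod (1 : C) = 1.
Proof. by rewrite /cmod /= expr1n expr0n addr0 sqrtr1. Qed.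
Lemma cmod0 : cmod (0 : C) = 0.
Proof. by rewrite /cmod /= expr0n addr0 sqrtr0. Qed.

Lemma le_sum_one (I : finType) (P : pred I) (F : I -> R) i :
  P i -> (forall j, 0 <= F j) -> F i <= \sum_(j | P j) F j.
Proof.
move=> Pi F0; rewrite (bigD1 i) //= lerDl; apply: sumr_ge0 => j _; exact: F0.
Qed.

Definition nR : R := #|gT|%:R.
Definition kR : R := #|Cg|%:R.

Lemma nR_gt0 : 0 < nR.
Proof. by rewrite /nR ltr0n; apply/card_gt0P; exists 1%g. Qed.
Lemma kR_gt0 : 0 < kR.
Proof. by rewrite /kR ltr0n; apply/card_gt0P; exists g; rewrite /Cg class_refl. Qed.

Definition aC (t : gT) : C := if t \in Cg then (nR / kR)%:C else 0.

Lemma cmod_aC t : cmod (aC t) = if t \in Cg then nR / kR else 0.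
Proof.
rewrite /aC; case: ifP => _; last exact: cmod0.
by rewrite cmodR ger0_norm // divr_ge0 // ltW ?nR_gt0 ?kR_gt0.
Qed.

Lemma sum_cmod_aC : \sum_t cmod (aC t) = nR.
Proof.
under eq_bigr do rewrite cmod_aC.
rewrite -big_mkcond /= sumr_const -mulr_natr -/kR mulfVK //.
by rewrite gt_eqF ?kR_gt0.
Qed.

Lemma sum_aC : \sum_t aC t = nR%:C.
Proof.
rewrite -sum_cmod_aC rmorph_sum /=; apply: eq_bigr => t _.
rewrite cmod_aC /aC; case: ifP => //.
Qed.

Lemma cmod_ninv : cmod ninv = nR^-1.
Proof. by rewrite /ninv cmodR ger0_norm // invr_ge0 ltW // nR_gt0. Qed.

Lemma ninv_nR : ninv * nR%:C = 1.
Proof. by rewrite /ninv -rmorphM /= mulVf // gt_eqF // nR_gt0. Qed.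

Lemma avg_bound (b : gT -> C) : (forall s, cmod (b s) <= 1) ->
  cmod (ninv * \sum_s aC s * b s) <= 1.
Proof.
move=> Hb; rewrite cmodM cmod_ninv.
apply: le_trans (_ : nR^-1 * nR <= 1); last by rewrite mulVf // gt_eqF // nR_gt0.
rewrite ler_pM2l ?invr_gt0 ?nR_gt0 //.
apply: le_trans (cmod_sum _ _ _) _; rewrite -sum_cmod_aC; apply: ler_sum => s _.
rewrite cmodM -[X in _ <= X]mulr1; apply: ler_wpM2l; [exact: cmod_ge0 | exact: Hb].
Qed.

Definition Lg (x y : gT) : C := if (x \in ZG) && ((x * y)%g \in Cg) then 1 else 0.
Definition T1 (x y : gT) : C := ninv * \sum_s aC s * Lg (s * x)%g y.
Definition T2 (x y : gT) : C := ninv * \sum_w aC (y^-1 * w)%g * Lg x w.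
Definition c1 : C := (6 / 5 : R)%:C.
Definition c2 : C := (1 / 5 : R)%:C.
Definition Dl (x y : gT) : C := if (x * y == 1)%g then 1 else 0.
Definition K2 (x y : gT) : C := 1 * T1 x y + (-1) * T2 x y.
Definition K (x y : gT) : C := c1 * Dl x y + c2 * K2 x y.

Lemma cmod_Lg x y : cmod (Lg x y) <= 1.
Proof. by rewrite /Lg; case: ifP; rewrite ?cmod1 ?cmod0. Qed.

Lemma cmod_T1 x y : cmod (T1 x y) <= 1.
Proof. by apply: avg_bound => s; exact: cmod_Lg. Qed.

Lemma cmod_T2 x y : cmod (T2 x y) <= 1.
Proof.
rewrite /T2 (reindex_inj (mulgI y)) /=.
under eq_bigr do rewrite mulKg.
by apply: avg_bound => s; exact: cmod_Lg.
Qed.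

Lemma T1_central x y : g \notin ZG -> x \in ZG -> T1 x y = 0.
Proof.
move=> gnc xZ; rewrite /T1 big1 ?mulr0 // => s _.
rewrite /aC; case: ifP => sC; last by rewrite mul0r.
by rewrite /Lg (negPf (Cg_nc2 gnc sC xZ)) /= mulr0.
Qed.

Lemma T2_central x : x \in ZG -> T2 x x^-1 = 1.
Proof.
move=> xZ; rewrite /T2 invgK.
transitivity (ninv * \sum_w aC (x * w)%g).
  congr (_ * _); apply: eq_bigr => w _; rewrite /Lg xZ /= /aC.
  by case: ifP => _; rewrite ?mulr1 ?mulr0.
have -> : \sum_w aC (x * w)%g = \sum_w aC w by rewrite [RHS](reindex_inj (mulgI x)).
by rewrite sum_aC ninv_nR.
Qed.

Lemma cmod_c1 : cmod c1 = 6 / 5.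
Proof. by rewrite /c1 cmodR ger0_norm. Qed.
Lemma cmod_c2 : cmod c2 = 1 / 5.
Proof. by rewrite /c2 cmodR ger0_norm. Qed.

Lemma cmod_K2 x y : cmod (K2 x y) <= 2.
Proof.
rewrite /K2; apply: le_trans (cmodD _ _) _; rewrite (cmodM 1) (cmodM (-1)) cmodN cmod1 !mul1r.
by have := cmod_T1 x y; have := cmod_T2 x y; lra.
Qed.

Lemma K_off x y : y != x^-1%g -> cmod (K x y) <= 2 / 5.
Proof.
move=> ne; rewrite /K /Dl.
have -> : (x * y == 1)%g = false.
  by apply/negP => /eqP e; case/negP: ne; apply/eqP; rewrite -(mulKg x y) e mulg1.
rewrite mulr0 add0r cmodM cmod_c2.
have := cmod_K2 x y; have := cmod_ge0 (K2 x y); lra.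
Qed.

Lemma K_diag x : cmod (K x x^-1) <= 8 / 5.
Proof.
rewrite /K; apply: le_trans (cmodD _ _) _; rewrite !cmodM cmod_c1 cmod_c2.
have : cmod (Dl x x^-1) <= 1 by rewrite /Dl; case: ifP; rewrite ?cmod1 ?cmod0.
have := cmod_K2 x x^-1; have := cmod_ge0 (K2 x x^-1); have := cmod_ge0 (Dl x x^-1).
nra.
Qed.

Lemma K_central x : g \notin ZG -> x \in ZG -> K x x^-1 = 1.
Proof.
move=> gnc xZ; rewrite /K /K2 /Dl mulgV eqxx T1_central // T2_central //.
rewrite /c1 /c2 mulr1 mulr0 mul1r add0r mulN1r mulrN1 -rmorphN -rmorphD /=.
by rewrite [X in X%:C](_ : _ = 1) //; field.
Qed.

Lemma E_bound (q : gT -> C) x : g \notin ZG -> classf q ->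
  cmod (\sum_y q y * K x y) <= \sum_y cmod (q y).
Proof.
move=> gnc Hq.
rewrite (bigD1 x^-1%g) //= [X in _ <= X](bigD1 x^-1%g) //=.
set A := cmod (q x^-1%g).
set B := \sum_(y | y != x^-1%g) cmod (q y).
have A0 : 0 <= A by exact: cmod_ge0.
have B0 : 0 <= B by apply: sumr_ge0 => y _; exact: cmod_ge0.
have H1 : cmod (\sum_(y | y != x^-1%g) q y * K x y) <= 2 / 5 * B.
  apply: le_trans (cmod_sum _ _ _) _; rewrite /B mulr_sumr; apply: ler_sum => y ne.
  rewrite cmodM mulrC; apply: ler_wpM2r; [exact: cmod_ge0 | exact: K_off].
apply: le_trans (cmodD _ _) _; rewrite cmodM -/A.
have K0 := cmod_ge0 (K x x^-1).
case: (boolP (x \in ZG)) => xZ.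
  rewrite K_central // cmod1 mulr1; lra.
have [h ne] := nc_witness xZ.
have AB : A <= B.
  rewrite /A -(Hq _ h) /B; apply: le_sum_one => [|y]; last exact: cmod_ge0.
  exact: nc_conj_ne.
have := K_diag x; nra.
Qed.

Lemma elem_bound (p q : gT -> C) : g \notin ZG -> inZL1 p -> inZL1 q ->
  cmod (phiK K (fun x y => p x * q y)) <= l1norm p * l1norm q.
Proof.
move=> gnc _ /inZL1_class Hq.
rewrite /phiK /l1norm.
have -> : \sum_x \sum_y p x * q y * K x y = \sum_x p x * \sum_y q y * K x y.
  by apply: eq_bigr => x _; rewrite big_distrr; apply: eq_bigr => y _; rewrite /= mulrA.
rewrite !cmodM cmod_ninv /nR [X in _ <= X]mulrACA; apply: ler_wpM2l.
  by rewrite mulr_ge0 // invr_ge0 ler0n.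
rewrite mulr_suml; apply: le_trans (cmod_sum _ _ _) _; apply: ler_sum => x _.
rewrite cmodM; apply: ler_wpM2l; [exact: cmod_ge0 | exact: E_bound].
Qed.

Lemma elem_bound1 (L : gT -> gT -> C) (p q : gT -> C) :
  (forall x y, cmod (L x y) <= 1) ->
  cmod (phiK L (fun x y => p x * q y)) <= l1norm p * l1norm q.
Proof.
move=> HL; rewrite /phiK /l1norm !cmodM cmod_ninv /nR [X in _ <= X]mulrACA.
apply: ler_wpM2l; first by rewrite mulr_ge0 // invr_ge0 ler0n.
rewrite mulr_suml; apply: le_trans (cmod_sum _ _ _) _; apply: ler_sum => x _.
rewrite mulr_sumr; apply: le_trans (cmod_sum _ _ _) _; apply: ler_sum => y _.
rewrite /= !cmodM -[X in _ <= X]mulr1; apply: ler_wpM2l.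
  by rewrite mulr_ge0 // cmod_ge0.
exact: HL.
Qed.

Lemma phiK_K mu : phiK K mu =
  c1 * (ninv * tmul mu 1%g) + c2 * phiK Lg (tsub (lact aC mu) (Defs.ract mu aC)).
Proof.
rewrite /K phi_lin /K2 phi_lin phi_delta phi_tsub phi_lact phi_ract.
by rewrite mul1r mulN1r.
Qed.

Definition uC (v : gT) : C := if v == 1%g then nR%:C else 0.

Lemma inZL1_u : inZL1 uC.
Proof. by apply: class_inZL1 => x h; rewrite /uC conjg_eq1. Qed.

Lemma inZL1_aC : inZL1 aC.
Proof. by apply: class_inZL1 => x h; rewrite /aC Cg_class. Qed.

Lemma conv_u f : conv f uC = f.
Proof.
apply: funext => t; rewrite /conv.
rewrite (bigD1 t) //= big1 ?addr0 => [|s /negPf ne]; last first.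
  by rewrite /uC -eq_mulVg1 ne mulr0.
by rewrite /uC -eq_mulVg1 eqxx mulrCA ninv_nR mulr1.
Qed.

Lemma l1norm_pt f v : nR^-1 * cmod (f v) <= l1norm f.
Proof.
rewrite /l1norm -/nR; apply: ler_wpM2l; first by rewrite invr_ge0 ltW // nR_gt0.
by rewrite (bigD1 v) //= lerDl; apply: sumr_ge0 => j _; exact: cmod_ge0.
Qed.

Lemma net_bound (I : Type) (le : I -> I -> Prop) (mu : I -> gT -> gT -> C) :
  g \notin ZG -> bdd_approx_diag le mu ->
  forall e : R, 0 < e -> exists i, 6 / 5 - 2 * e <= projnorm (mu i).
Proof.
move=> gnc [[_ _ _ dir] Hrep _ [H1 _ H3]] e e0.
have [i1 Hi1] := H1 uC inZL1_u e e0.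
have [i2 Hi2] := H3 aC inZL1_aC e e0.
have [k [k1 k2]] := dir i1 i2.
exists k.
have hA := Hi1 k k1; rewrite conv_u in hA.
have hB := Hi2 k k2.
set m := mu k in hA hB *.
have pA : cmod (ninv * tmul m 1%g - 1) <= e.
  have -> : ninv * tmul m 1%g - 1 = ninv * (tmul m 1%g - uC 1%g).
    by rewrite mulrBr /uC eqxx ninv_nR.
  rewrite cmodM cmod_ninv; apply: le_trans (l1norm_pt (fun t => tmul m t - uC t) 1%g) _.
  exact: ltW.
have pB : cmod (phiK Lg (tsub (lact aC m) (Defs.ract m aC))) <= e.
  apply: le_trans (ltW hB); apply: projnorm_bound; last first.
    by apply: comm_rep => //; [exact: inZL1_aC | exact: Hrep].
  by move=> p q _ _; apply: elem_bound1 => x y; exact: cmod_Lg.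
have pK : cmod (phiK K m) <= projnorm m.
  apply: projnorm_bound; last exact: Hrep.
  by move=> p q Hp Hq; apply: elem_bound.
set A := ninv * tmul m 1%g in pA.
set B := phiK Lg _ in pB.
have E : c1 = phiK K m - c1 * (A - 1) - c2 * B. by rewrite phiK_K -/A -/B; ring.
have : cmod c1 <= cmod (phiK K m) + cmod c1 * cmod (A - 1) + cmod c2 * cmod B.
  rewrite {1}E -!cmodM; apply: le_trans (cmodD _ _) _; rewrite cmodN lerD2r.
  by apply: le_trans (cmodD _ _) _; rewrite cmodN.
rewrite cmod_c1 cmod_c2.
have := cmod_ge0 B; have := cmod_ge0 (A - 1); nra.
Qed.
End S.

Theorem corollary1p9 (R : realType) (gT : finGroupType) :
  ~~ abelian [set: gT] -> (1%:E < @amZL1 R gT)%E.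
Proof.
move=> nab.
have [g gnc] : exists g : gT, g \notin 'C([set: gT])%g.
  case: (boolP [exists g : gT, g \notin 'C([set: gT])%g]) => [/existsP//|/existsPn H].
  case/negP: nab; apply/centsP => x _ y _; move: (H x); rewrite negbK => /centP; apply; by rewrite inE.
apply: (@lt_le_trans _ _ ((6 / 5 : R)%:E)).
  by rewrite lte_fin; lra.
apply: le_ereal_inf_tmp => c [I [le [mu [Hmu ->]]]].
apply/lee_subgt0Pr => e e0.
have e20 : 0 < e / 2 by rewrite divr_gt0.
have [i Hi] := net_bound gnc Hmu e20.
apply: le_ereal_sup_tmp; exists (projnorm (mu i))%:E; first by exists i.
rewrite -EFinB lee_fin; apply: le_trans Hi.
have -> : 2 * (e / 2) = e by field.
by [].
Qed.
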